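(* Let $\lambda_1\ge\dots\ge\lambda_r>0>\lambda_{r+1}\ge\dots\ge\lambda_n$, $\Lambda_X=\operatorname{diag}(\lambda_1,\dots,\lambda_r)$, $\Lambda_S=\operatorname{diag}(\lambda_{r+1},\dots,\lambda_n)$, $d=\sqrt{\min\{r,n-r\}}$. Let $H_X\in\mathbb S^r$, $H_S\in\mathbb S^{n-r}$, $H_O\in\mathbb R^{(n-r)\times r}$ satisfy $\|H_X\|_2+\|H_S\|_2\le\frac{\lambda_r-\lambda_{r+1}}{2nd}$, and let $W_O^{(0)}$ be the solution of $W_O(\Lambda_X+H_X)-(\Lambda_S+H_S)W_O=H_O$. Then $$\|W_O^{(0)}-\Theta_0\circ H_O\|_2\le\frac{2nd}{(\lambda_r-\lambda_{r+1})^2}\|H_O\|_2(\|H_X\|_2+\|H_S\|_2),$$ where $\Theta_0\in\mathbb R^{(n-r)\times r}$ has entries $(\Theta_0)_{ij}=\frac{1}{\lambda_j-\lambda_{r+i}}$.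
   Context: $\mathbb S^p$ denotes real symmetric $p\times p$ matrices; $\|\cdot\|_2$ is the spectral norm; $\circ$ is the Hadamard product. *)

(* Defs.v *)
From HB Require Import structures.
From mathcomp Require Import all_boot all_order all_algebra.
From mathcomp Require Import all_classical all_reals.
Set Implicit Arguments. Unset Strict Implicit. Unset Printing Implicit Defensive.
Import Order.TTheory GRing.Theory Num.Theory.
Local Open Scope ring_scope.
Local Open Scope classical_set_scope.

Definition vnorm2 (R : realType) (m : nat) (x : 'cV[R]_m) : R :=
  Num.sqrt (\sum_(i < m) x i 0 ^+ 2).

Definition specnorm (R : realType) (m n : nat) (A : 'M[R]_(m, n)) : R :=
  sup [set vnorm2 (A *m x) | x in [set x : 'cV[R]_n | vnorm2 x <= 1]].

Definition hadamard (R : ringType) (m n : nat) (A B : 'M[R]_(m, n)) : 'M[R]_(m, n) :=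
  \matrix_(i, j) (A i j * B i j).

(* Main.v *)
Require Import Defs.
From HB Require Import structures.
From mathcomp Require Import all_boot all_order all_algebra.
From mathcomp Require Import all_classical all_reals.
From mathcomp Require Import ring lra zify.
Import Order.TTheory GRing.Theory Num.Theory.
Local Open Scope ring_scope.

Module Aux.
Set Implicit Arguments. Unset Strict Implicit. Unset Printing Implicit Defensive.
Section H.
Variable R : realType.

Lemma cs_ineq (k : nat) (a b : 'I_k -> R) :
  (\sum_i a i * b i) ^+ 2 <= (\sum_i a i ^+ 2) * (\sum_i b i ^+ 2).
Proof.
have H0 : 0 <= \sum_i \sum_j (a i * b j - a j * b i) ^+ 2.
  by apply: sumr_ge0 => i _; apply: sumr_ge0 => j _; exact: sqr_ge0.
have E : \sum_i \sum_j (a i * b j - a j * b i) ^+ 2 =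
   \sum_i \sum_j (a i ^+ 2 * b j ^+ 2) + \sum_i \sum_j (a j ^+ 2 * b i ^+ 2)
   - (\sum_i \sum_j (a i * b i) * (a j * b j)) *+ 2.
  rewrite -sumrMnl -big_split -sumrB /=; apply: eq_bigr => i _.
  rewrite -sumrMnl -big_split -sumrB /=; apply: eq_bigr => j _.
  rewrite -mulr_natr; ring.
have EA : \sum_i \sum_j (a i ^+ 2 * b j ^+ 2) = (\sum_i a i ^+ 2) * (\sum_i b i ^+ 2).
  by rewrite big_distrl; apply: eq_bigr => i _; rewrite big_distrr.
have EB : \sum_i \sum_j (a j ^+ 2 * b i ^+ 2) = (\sum_i a i ^+ 2) * (\sum_i b i ^+ 2).
  by rewrite exchange_big.
have EC : \sum_i \sum_j (a i * b i) * (a j * b j) = (\sum_i a i * b i) ^+ 2.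
  by rewrite expr2 big_distrl; apply: eq_bigr => i _; rewrite big_distrr.
move: H0; rewrite E EA EB EC -mulr_natr; lra.
Qed.

Definition sq (m : nat) (x : 'cV[R]_m) := \sum_(i < m) x i 0 ^+ 2.

Lemma sq_ge0 m (x : 'cV[R]_m) : 0 <= sq x.
Proof. by apply: sumr_ge0 => i _; exact: sqr_ge0. Qed.

Lemma vnorm2_ge0 m (x : 'cV[R]_m) : 0 <= vnorm2 x.
Proof. exact: sqrtr_ge0. Qed.

Lemma vnorm2_sq m (x : 'cV[R]_m) : vnorm2 x ^+ 2 = sq x.
Proof. by rewrite /vnorm2 sqr_sqrtr // sq_ge0. Qed.

Lemma vnorm2_le m (x : 'cV[R]_m) K : 0 <= K -> sq x <= K ^+ 2 -> vnorm2 x <= K.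
Proof.
move=> K0 H; rewrite /vnorm2 -(ger0_norm K0) -sqrtr_sqr ler_sqrt //.
exact: sqr_ge0.
Qed.

Lemma sq_add m (x y : 'cV[R]_m) :
  sq (x + y) = sq x + sq y + (\sum_i x i 0 * y i 0) *+ 2.
Proof.
rewrite /sq -sumrMnl -!big_split /=; apply: eq_bigr => i _.
rewrite !mxE -mulr_natr; ring.
Qed.

Lemma vnorm2_triangle m (x y : 'cV[R]_m) : vnorm2 (x + y) <= vnorm2 x + vnorm2 y.
Proof.
apply: vnorm2_le; first by rewrite addr_ge0 // vnorm2_ge0.
have cs := cs_ineq (fun i => x i 0) (fun i => y i 0).
have ux := vnorm2_sq x; have uy := vnorm2_sq y.
have gx := vnorm2_ge0 x; have gy := vnorm2_ge0 y.
rewrite sq_add.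
set p := \sum_i x i 0 * y i 0.
rewrite -/(sq x) -/(sq y) in cs.
have : p <= vnorm2 x * vnorm2 y.
  have : p ^+ 2 <= (vnorm2 x * vnorm2 y) ^+ 2 by rewrite exprMn ux uy.
  have := mulr_ge0 gx gy; set q := vnorm2 x * vnorm2 y => q0 h.
  case: (lerP p q) => // hq. 
  have p0 : 0 < p by apply: le_lt_trans hq.
  have : q ^+ 2 < p ^+ 2 by rewrite ltr_pXn2r // ?nnegrE // ltW.
  lra.
rewrite -ux -uy -mulr_natr; nra.
Qed.

Lemma sq_opp m (x : 'cV[R]_m) : sq (- x) = sq x.
Proof. by apply: eq_bigr => i _; rewrite mxE sqrrN. Qed.

Lemma vnorm2_opp m (x : 'cV[R]_m) : vnorm2 (- x) = vnorm2 x.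
Proof. by rewrite /vnorm2 -/(sq _) sq_opp. Qed.

Lemma sq_scale m (c : R) (x : 'cV[R]_m) : sq (c *: x) = c ^+ 2 * sq x.
Proof. rewrite /sq big_distrr; apply: eq_bigr => i _; rewrite mxE exprMn //. Qed.

Lemma vnorm2_scale m (c : R) (x : 'cV[R]_m) : vnorm2 (c *: x) = `|c| * vnorm2 x.
Proof.
rewrite /vnorm2 -!/(sq _) sq_scale sqrtrM ?sqr_ge0 // sqrtr_sqr //.
Qed.

Definition fro (m n : nat) (A : 'M[R]_(m, n)) := \sum_i \sum_j A i j ^+ 2.

Lemma sq_mulmx m n (A : 'M[R]_(m, n)) x : sq (A *m x) <= fro A * sq x.
Proof.
rewrite /sq /fro big_distrl; apply: ler_sum => i _.
rewrite mxE; exact: (cs_ineq (fun j => A i j) (fun j => x j 0)).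
Qed.

Lemma fro_ge0 m n (A : 'M[R]_(m, n)) : 0 <= fro A.
Proof. by apply: sumr_ge0 => i _; apply: sumr_ge0 => j _; exact: sqr_ge0. Qed.


Definition SS m n (A : 'M[R]_(m, n)) :=
  [set vnorm2 (A *m x) | x in [set x : 'cV[R]_n | vnorm2 x <= 1]]%classic.

Lemma sq0 m : sq (0 : 'cV[R]_m) = 0.
Proof. by rewrite /sq big1 // => i _; rewrite mxE expr0n. Qed.

Lemma vnorm2_0 m : vnorm2 (0 : 'cV[R]_m) = 0.
Proof. by rewrite /vnorm2 -/(sq _) sq0 sqrtr0. Qed.

Lemma SS_ne m n (A : 'M[R]_(m, n)) : (SS A !=set0)%classic.
Proof. by exists (vnorm2 (A *m 0)), 0 => //=; rewrite vnorm2_0 ler01. Qed.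

Lemma SS_ub m n (A : 'M[R]_(m, n)) : has_ubound (SS A).
Proof.
exists (Num.sqrt (fro A)) => _ [x /= hx <-].
apply: vnorm2_le; first exact: sqrtr_ge0.
rewrite sqr_sqrtr ?fro_ge0 //; apply: le_trans (sq_mulmx A x) _.
rewrite ler_piMr ?fro_ge0 // -vnorm2_sq.
have := vnorm2_ge0 x; move: hx; set v := vnorm2 x => h1 h0; nra.
Qed.

Lemma spec_ub m n (A : 'M[R]_(m, n)) x : vnorm2 x <= 1 -> vnorm2 (A *m x) <= specnorm A.
Proof. by move=> hx; apply: (ub_le_sup (SS_ub A)); exists x. Qed.

Lemma spec_ge0 m n (A : 'M[R]_(m, n)) : 0 <= specnorm A.
Proof. by rewrite -(vnorm2_0 m) -(mulmx0 _ A); apply: spec_ub; rewrite vnorm2_0. Qed.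

Lemma spec_le m n (A : 'M[R]_(m, n)) K :
  (forall x, vnorm2 x <= 1 -> vnorm2 (A *m x) <= K) -> specnorm A <= K.
Proof. by move=> H; apply: ge_sup; [exact: SS_ne | move=> _ [x /= hx <-]; exact: H]. Qed.

Lemma sq_eq0 m (x : 'cV[R]_m) : sq x = 0 -> x = 0.
Proof.
move=> /eqP; rewrite psumr_eq0 => [/allP h|i _]; last exact: sqr_ge0.
apply/matrixP => i j; rewrite (ord1 j) mxE.
by have := h i (mem_index_enum _); rewrite /= sqrf_eq0 => /eqP.
Qed.

Lemma spec_mul m n (A : 'M[R]_(m, n)) x : vnorm2 (A *m x) <= specnorm A * vnorm2 x.
Proof.
have [v0|] := eqVneq (vnorm2 x) 0.
  have : sq x = 0.
    by rewrite -(vnorm2_sq x); move: v0 => /= ->; rewrite expr0n.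
  by move/sq_eq0 => hx0; rewrite hx0 mulmx0 (vnorm2_0 n) (vnorm2_0 m) mulr0.
move=> vn0; have vp : 0 < vnorm2 x by rewrite lt_def vn0 vnorm2_ge0.
have hi : 0 <= (vnorm2 x)^-1 by rewrite invr_ge0 ltW.
have := spec_ub A (x := (vnorm2 x)^-1 *: x).
rewrite vnorm2_scale -scalemxAr vnorm2_scale (ger0_norm hi) (mulVf vn0) lexx => /(_ isT).
by rewrite -(ler_pM2r vp) mulrAC (mulVf vn0) mul1r.
Qed.

Lemma spec_add m n (A B : 'M[R]_(m, n)) : specnorm (A + B) <= specnorm A + specnorm B.
Proof.
apply: spec_le => x hx; rewrite mulmxDl.
apply: le_trans (vnorm2_triangle _ _) _; apply: lerD; exact: spec_ub.
Qed.

Lemma spec_sub m n (A B : 'M[R]_(m, n)) : specnorm (A - B) <= specnorm A + specnorm B.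
Proof.
apply: spec_le => x hx; rewrite mulmxDl.
apply: le_trans (vnorm2_triangle _ _) _; apply: lerD; first exact: spec_ub.
by rewrite mulNmx vnorm2_opp; exact: spec_ub.
Qed.

Lemma spec_mulmx m n p (A : 'M[R]_(m, n)) (B : 'M[R]_(n, p)) :
  specnorm (A *m B) <= specnorm A * specnorm B.
Proof.
apply: spec_le => x hx; rewrite -mulmxA.
apply: le_trans (spec_mul _ _) _; apply: ler_wpM2l; first exact: spec_ge0.
exact: spec_ub.
Qed.

Lemma vnorm2_delta n (j : 'I_n) : vnorm2 (delta_mx j (0 : 'I_1) : 'cV[R]_n) = 1.
Proof.
rewrite /vnorm2 (bigD1 j) //= big1 => [|i /negbTE hi]; last by rewrite mxE hi expr0n.
by rewrite mxE !eqxx expr1n addr0 sqrtr1.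
Qed.

Lemma fro_col m n (A : 'M[R]_(m, n)) : fro A <= n%:R * specnorm A ^+ 2.
Proof.
rewrite /fro exchange_big /=.
have -> : n%:R * specnorm A ^+ 2 = \sum_(j < n) specnorm A ^+ 2.
  by rewrite sumr_const card_ord mulr_natl.
apply: ler_sum => j _.
have h1 : vnorm2 (delta_mx j 0 : 'cV[R]_n) <= 1 by rewrite vnorm2_delta.
have := spec_ub A h1; rewrite -colE => h.
have -> : \sum_i A i j ^+ 2 = vnorm2 (col j A) ^+ 2.
  by rewrite vnorm2_sq; apply: eq_bigr => i _; rewrite mxE.
by rewrite ler_pXn2r ?nnegrE ?vnorm2_ge0 ?spec_ge0.
Qed.

Lemma spec_hadamard m n (T M : 'M[R]_(m, n)) c :
  0 <= c -> (forall i j, T i j ^+ 2 <= c ^+ 2) ->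
  specnorm (hadamard T M) <= c * Num.sqrt n%:R * specnorm M.
Proof.
move=> c0 hT; apply: spec_le => x hx.
apply: vnorm2_le; first by rewrite !mulr_ge0 ?sqrtr_ge0 ?spec_ge0.
apply: le_trans (sq_mulmx _ _) _.
have hf : fro (hadamard T M) <= c ^+ 2 * fro M.
  rewrite /fro big_distrr; apply: ler_sum => i _; rewrite big_distrr.
  apply: ler_sum => j _; rewrite mxE exprMn; apply: ler_wpM2r; [exact: sqr_ge0|exact: hT].
have hs : sq x <= 1.
  rewrite -vnorm2_sq; have := vnorm2_ge0 x; move: hx; set v := vnorm2 x => h1 h0; nra.
have := fro_col M; have := fro_ge0 M; have := sq_ge0 x; have := fro_ge0 (hadamard T M).
rewrite !exprMn sqr_sqrtr ?ler0n //.
set a := fro _; set b := fro M; set s := sq x; set q := specnorm M ^+ 2 => ha hs0 hb hbq.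
have c2 := sqr_ge0 c.
have h1 : a * s <= a by rewrite -{2}(mulr1 a) ler_wpM2l.
have h2 : c^+2 * b <= c^+2 * (n%:R * q) by rewrite ler_wpM2l.
rewrite -mulrA; apply: le_trans h1 _; exact: le_trans hf h2.
Qed.

End H.

End Aux.
Import Aux.

Theorem lemma14 (R : realType) (n r : nat) (lam : nat -> R)
  (Hr : (0 < r < n)%N)
  (Hsorted : forall i j : nat, (1 <= i)%N -> (i <= j)%N -> (j <= n)%N -> lam j <= lam i)
  (Hpos : 0 < lam r) (Hneg : lam r.+1 < 0)
  (HX : 'M[R]_r) (HS : 'M[R]_(n - r)) (HO : 'M[R]_(n - r, r))
  (HXsym : HX^T = HX) (HSsym : HS^T = HS)
  (Hsmall : specnorm HX + specnorm HS <=
     (lam r - lam r.+1) /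
       (2 * n%:R * Num.sqrt (minn r (n - r))%:R))
  (WO : 'M[R]_(n - r, r))
  (HW : WO *m (diag_mx (\row_(j < r) lam j.+1) + HX)
        - (diag_mx (\row_(i < n - r) lam (r + i).+1) + HS) *m WO = HO) :
  specnorm (WO - hadamard (\matrix_(i < n - r, j < r) (lam j.+1 - lam (r + i).+1)^-1) HO)
  <= 2 * n%:R * Num.sqrt (minn r (n - r))%:R / (lam r - lam r.+1) ^+ 2
     * specnorm HO * (specnorm HX + specnorm HS).
Proof.
move: Hr => /andP [r0 rn].
set g := lam r - lam r.+1.
have g0 : 0 < g by rewrite /g; lra.
set Th := \matrix_(i < n - r, j < r) (lam j.+1 - lam (r + i).+1)^-1.
have hd : forall (i : 'I_(n - r)) (j : 'I_r), g <= lam j.+1 - lam (r + i).+1.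
  move=> i j.
  have h1 : lam r <= lam j.+1 by apply: Hsorted; [done | exact: ltn_ord | exact: ltnW].
  have h2 : lam (r + i).+1 <= lam r.+1.
    apply: Hsorted => //; first by rewrite ltnS leq_addr.
    have := ltn_ord i; lia.
  rewrite /g; lra.
have hT : forall i j, Th i j ^+ 2 <= g^-1 ^+ 2.
  move=> i j; rewrite mxE; have := hd i j => h.
  have d0 : 0 < lam j.+1 - lam (r + i).+1 by apply: lt_le_trans h.
  have hi : (lam j.+1 - lam (r + i).+1)^-1 <= g^-1 by rewrite lef_pV2 ?posrE.
  have hi0 : 0 <= (lam j.+1 - lam (r + i).+1)^-1 by rewrite invr_ge0 ltW.
  nra.
have key : WO - hadamard Th HO = hadamard Th (HS *m WO - WO *m HX).
  apply/matrixP => i j.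
  have := congr1 (fun M : 'M[R]_(n - r, r) => M i j) HW.
  rewrite mulmxDr mulmxDl mul_mx_diag mul_diag_mx /= !mxE => <-.
  have := hd i j => h.
  have d0 : lam j.+1 - lam (r + i).+1 != 0 by rewrite gt_eqF // (lt_le_trans g0 h).
  by field.
rewrite -/g.
set hx := specnorm HX; set hs := specnorm HS; set w := specnorm WO.
set ho := specnorm HO; set e := specnorm (WO - hadamard Th HO).
set s := Num.sqrt (r%:R : R); set sm := Num.sqrt ((minn r (n - r))%:R : R).
set u := g^-1.
have u0 : 0 <= u by rewrite invr_ge0 ltW.
have gu : g * u = 1 by rewrite mulfV // gt_eqF.
have s0 : 0 <= s := sqrtr_ge0 _.
have sm0 : 0 <= sm := sqrtr_ge0 _.
have ss : s ^+ 2 = r%:R by rewrite sqr_sqrtr ?ler0n.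
have smsm : sm ^+ 2 = (minn r (n - r))%:R by rewrite sqr_sqrtr ?ler0n.
have m1 : 1 <= (minn r (n - r))%:R :> R.
  by rewrite ler1n leq_min r0 subn_gt0 rn.
have r1 : 1 <= r%:R :> R by rewrite ler1n.
have rnR : r%:R <= n%:R :> R by rewrite ler_nat ltnW.
have sm1 : 1 <= sm by nra.
have s1 : 1 <= s by nra.
have hx0 : 0 <= hx := spec_ge0 _.
have hs0 : 0 <= hs := spec_ge0 _.
have w0 : 0 <= w := spec_ge0 _.
have ho0 : 0 <= ho := spec_ge0 _.
have e0 : 0 <= e := spec_ge0 _.
have he : e <= u * s * (hs * w + w * hx).
  rewrite /e key; apply: le_trans (spec_hadamard _ u0 hT) _.
  apply: ler_wpM2l; first by rewrite mulr_ge0.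
  apply: le_trans (spec_sub _ _) _.
  by apply: lerD; [exact: spec_mulmx | exact: spec_mulmx].
have hw : w <= u * s * ho + e.
  rewrite /w {1}(_ : WO = hadamard Th HO + (WO - hadamard Th HO)); last by rewrite addrC subrK.
  apply: le_trans (spec_add _ _) _; apply: lerD => //.
  exact: spec_hadamard.
rewrite (_ : (g ^+ 2)^-1 = u ^+ 2); last by rewrite /u exprVn.
have D0 : 0 < 2 * n%:R * sm.
  rewrite !mulr_gt0 // ?ltr0n ?(ltn_trans r0 rn) //; lra.
move: Hsmall; rewrite -/hx -/hs -/sm -/g ler_pdivlMr // => Hs.
set h := hx + hs.
have hk : u * s * h * (2 * n%:R * sm) <= s.
  have := ler_wpM2l (mulr_ge0 u0 s0) Hs; rewrite -/h => H.
  have E1 : u * s * h * (2 * n%:R * sm) = u * s * (h * (2 * n%:R * sm)) by ring.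
  have E2 : u * s * g = s by rewrite mulrAC (mulrC u) gu mul1r.
  by rewrite E1; apply: le_trans H _; rewrite E2.
have nR1 : 1 <= n%:R :> R by lra.
set k := u * s * h.
have k0 : 0 <= k by rewrite /k !mulr_ge0 // addr_ge0.
have k2 : 2 * k <= 1.
  have : k * (2 * n%:R * sm) <= n%:R * sm by apply: le_trans hk _; nra.
  have : 0 < n%:R * sm by nra.
  nra.
have he2 : e <= k * w by rewrite /k /h; move: he; nra.
have he3 : e <= 2 * k * (u * s * ho) by nra.
have : 2 * k * (u * s * ho) = 2 * r%:R * u ^+ 2 * ho * h.
  by rewrite /k -ss; ring.
move=> E; apply: le_trans he3 _; rewrite E.
have : 0 <= u ^+ 2 * ho * h by rewrite !mulr_ge0 // ?sqr_ge0 // addr_ge0.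
have : r%:R <= n%:R * sm by nra.
nra.
Qed.
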